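(* Let $Y(0),Y(1)$ be integrable real potential outcomes and $X$ a random vector in $\mathbb{R}^{d_X}$ with support $\mathcal{X}=\mathcal{X}_0\cup\mathcal{X}_1$, $\mathcal{X}_0\cap\mathcal{X}_1=\emptyset$, with $D=1\{X\in\mathcal{X}_1\}$ and $Y=DY(1)+(1-D)Y(0)$. Suppose $x\mapsto E[Y(d)|X=x]$ is continuous on $\mathcal{X}$ for $d=0,1$, and local comonotonicity holds: for every $x_1\in\mathcal{X}$ there is a neighborhood $N$ of $x_1$ such that for all $x_2\in N\cap\mathcal{X}$, $$E[Y(1)|X=x_1]\geq E[Y(1)|X=x_2]\iff E[Y(0)|X=x_1]\geq E[Y(0)|X=x_2].$$ Let $\mathcal{F}=\mathrm{cl}(\mathrm{int}(\mathcal{X}_1))\cap\mathrm{cl}(\mathrm{int}(\mathcal{X}_0))$ and for $d\in\{0,1\}$ let $g_d$ be a function on $\mathcal{X}_d\cup\mathcal{F}$ with $g_d(x)=E[Y|X=x]$ for $x\in\mathcal{X}_d$ and continuous at each point of $\mathcal{F}$. Suppose that for some $d$ and some $x\in\mathcal{X}_d$ there is a continuous path $p:[0,1]\to\mathcal{X}_d\cup\mathcal{F}$ with $p(0)=x$, $p(1)=x^*\in\mathcal{F}$, and $E[Y|X=p(t)]=E[Y|X=x]$ for all $t\in(0,1)$. Then $E[Y(1)|X=x]=g_1(x^* )$ and $E[Y(0)|X=x]=g_0(x^* )$.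
   Context: Conditional expectation functions are understood as the unique continuous versions; for $z\in\mathcal{X}$, $E[Y|X=z]$ equals $E[Y(d)|X=z]$ when $z\in\mathcal{X}_d$. *)

(* Defs.v *)
From HB Require Import structures.
From mathcomp Require Import all_boot all_order all_algebra.
From mathcomp Require Import all_classical all_reals all_analysis.
Set Implicit Arguments. Unset Strict Implicit. Unset Printing Implicit Defensive.
Import Order.TTheory GRing.Theory Num.Theory.
Import numFieldNormedType.Exports.
Local Open Scope classical_set_scope.
Local Open Scope ring_scope.

(* The (continuous version of the) regression function of the observed outcome
   x |-> E[Y | X = x] on the support X = X0 u X1 (X0, X1 disjoint):
   it equals E[Y(1)|X=x] = m1 x on X1 and E[Y(0)|X=x] = m0 x on X0. *)
Definition cefY {R : realType} {n : nat} (X1 : set 'rV[R]_n)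
  (m0 m1 : 'rV[R]_n -> R) (z : 'rV[R]_n) : R :=
  if `[< X1 z >] then m1 z else m0 z.

Definition continuous_at_within {R : realType} {n : nat} (A : set 'rV[R]_n)
  (f : 'rV[R]_n -> R) (a : 'rV[R]_n) : Prop :=
  f @ within A (nbhs a) --> f a.

Definition frontierF {R : realType} {n : nat} (X0 X1 : set 'rV[R]_n) :
  set 'rV[R]_n := closure (interior X1) `&` closure (interior X0).

(* Main.v *)
Require Import Defs.
From HB Require Import structures.
From mathcomp Require Import all_boot all_order all_algebra.
From mathcomp Require Import all_classical all_reals all_analysis.
From mathcomp Require Import lra ring.
Import Order.TTheory GRing.Theory Num.Theory.
Import numFieldNormedType.Exports.
Local Open Scope classical_set_scope.
Local Open Scope ring_scope.

Definition ctsI {R : realType} (f : R -> R) := forall t, 0 <= t <= 1 ->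
  forall e, 0 < e -> exists2 δ, 0 < δ & forall s, 0 <= s <= 1 ->
    `|s - t| < δ -> `|f s - f t| < e.

Definition lmaxI {R : realType} (f : R -> R) := forall t, 0 < t < 1 ->
  exists2 δ, 0 < δ & forall s, 0 <= s <= 1 -> `|s - t| < δ -> f s <= f t.
Lemma L2 {R : realType} {f : R -> R} : ctsI f -> lmaxI f -> ~ (f 0 < f 1).
Proof.
move=> cf lf f01.
pose y := (f 0 + f 1) / 2.
have f0y : f 0 < y by rewrite /y; lra.
have f1y : y < f 1 by rewrite /y; lra.
pose S := [set r : R | 0 <= r <= 1 /\ f r <= y].
have S0 : S 0 by split; [rewrite lexx ler01 | exact: ltW].
have hS : has_sup S by split; [exists 0 | exists 1 => r [/andP[_ ?] _]].
pose r0 := sup S.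
have r0ge : 0 <= r0 by exact: sup_upper_bound hS _ S0.
have r0le : r0 <= 1 by apply: ge_sup; [exists 0 | move=> r [/andP[_ ?] _]].
have r0I : 0 <= r0 <= 1 by rewrite r0ge r0le.
have [fr0y|fr0y] := ltrP y (f r0).
  have [δ δ0 Hδ] := cf r0 r0I (f r0 - y) (ltac:(lra)).
  have [s Ss Hs] := sup_adherent δ0 hS.
  have sr0 : s <= r0 by exact: sup_upper_bound hS _ Ss.
  case: Ss => /andP[s0 s1] fs.
  have hd : `|s - r0| < δ by rewrite ler0_norm ?subr_le0 //; rewrite /r0 in Hs *; lra.
  have := Hδ s (ltac:(rewrite s0 s1 //)) hd.
  rewrite ltr_norml => /andP[h1 h2]; lra.
have r01 : r0 < 1.
  rewrite lt_neqAle r0le andbT; apply/negP => /eqP e.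
  by move: fr0y; rewrite e; lra.
have [δ δ0 Hδ] : exists2 δ, 0 < δ & forall s, 0 <= s <= 1 -> `|s - r0| < δ -> f s <= y.
  have [lt|eq] := ltrP (f r0) y.
    have [δ δ0 Hδ] := cf r0 r0I (y - f r0) (ltac:(lra)).
    exists δ => // s sI /(Hδ s sI); rewrite ltr_norml => /andP[h1 h2]; lra.
  have e : f r0 = y by apply/eqP; rewrite eq_le fr0y eq.
  have r0p : 0 < r0.
    rewrite lt_neqAle r0ge andbT; apply/negP => /eqP e0.
    by move: e; rewrite -e0; lra.
  have [δ δ0 Hδ] := lf r0 (ltac:(rewrite r0p r01 //)).
  by exists δ => // s sI /(Hδ s sI); rewrite e.
pose s := r0 + Num.min δ (1 - r0) / 2.
have m0 : 0 < Num.min δ (1 - r0) by rewrite lt_min δ0 subr_gt0 r01.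
have m1 : Num.min δ (1 - r0) <= δ by rewrite ge_min lexx.
have m2 : Num.min δ (1 - r0) <= 1 - r0 by rewrite ge_min lexx orbT.
have sI : 0 <= s <= 1 by apply/andP; split; rewrite /s; lra.
have Ss : S s.
  split => //; apply: Hδ => //.
  rewrite /s addrAC subrr add0r ger0_norm; lra.
have := sup_upper_bound hS Ss; rewrite -/r0 /s; lra.
Qed.
Lemma L2eq {R : realType} {f : R -> R} : ctsI f -> lmaxI f -> f 0 = f 1.
Proof.
move=> cf lf.
have A1 : ~ (f 0 < f 1) by exact: L2.
pose h := fun t : R => f (1 - t).
have ch : ctsI h.
  move=> t /andP[t0 t1] e e0.
  have [δ δ0 Hδ] := cf (1 - t) (ltac:(apply/andP; split; lra)) e e0.
  exists δ => // s /andP[s0 s1] hs; apply: Hδ; first by apply/andP; split; lra.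
  by rewrite distrC; have -> : (1 - t) - (1 - s) = s - t by ring.
have lh : lmaxI h.
  move=> t /andP[t0 t1].
  have [δ δ0 Hδ] := lf (1 - t) (ltac:(apply/andP; split; lra)).
  exists δ => // s /andP[s0 s1] hs; apply: Hδ; first by apply/andP; split; lra.
  by rewrite distrC; have -> : (1 - t) - (1 - s) = s - t by ring.
have := L2 ch lh; rewrite /h subr0 subrr => A2.
by apply/eqP; rewrite eq_le !leNgt; apply/andP; split; apply/negP.
Qed.

Lemma Lhalf {R : realType} {a b : R -> R} {c t : R} : ctsI b ->
  (forall t, 0 <= t <= 1 -> exists2 δ, 0 < δ & forall s, 0 <= s <= 1 ->
     `|s - t| < δ -> (a s <= a t <-> b s <= b t)) ->
  (forall t, 0 < t < 1 -> a t = c \/ b t = c) ->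
  0 < t < 1 -> a t = c ->
  exists2 δ, 0 < δ & forall s, 0 <= s <= 1 -> `|s - t| < δ -> a s <= a t /\ b s <= b t.
Proof.
move=> cb co dic /andP[t0 t1] atc.
have tI : 0 <= t <= 1 by apply/andP; split; lra.
have [δ1 δ10 H1] := co t tI.
pose m := Num.min δ1 (Num.min t (1 - t)).
have m0 : 0 < m by rewrite /m !lt_min δ10 t0 subr_gt0 t1.
have m1 : m <= δ1 by rewrite /m ge_min lexx.
have m2 : m <= t by rewrite /m !ge_min lexx orbT.
have m3 : m <= 1 - t by rewrite /m !ge_min lexx !orbT.
have [btc|btc] := ltrP (b t) c.
  have [δ2 δ20 H2] := cb t tI (c - b t) (ltac:(lra)).
  exists (Num.min m δ2); first by rewrite lt_min m0 δ20.
  move=> s sI; rewrite lt_min => /andP[hm hd].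
  have := H2 s sI hd; rewrite ltr_norml => /andP[_ h2].
  have hs : 0 < s < 1.
    move: hm; rewrite ltr_norml => /andP[h3 h4]; apply/andP; split; lra.
  have hsd : `|s - t| < δ1 by lra.
  case: (dic s hs) => [asc|bsc]; last by lra.
  have ha : a s <= a t by rewrite asc atc.
  by split => //; apply/(H1 s sI hsd).
exists m => // s sI hm.
have hs : 0 < s < 1.
  move: hm; rewrite ltr_norml => /andP[h3 h4]; apply/andP; split; lra.
have hsd : `|s - t| < δ1 by lra.
case: (dic s hs) => [asc|bsc].
  have ha : a s <= a t by rewrite asc atc.
  by split => //; apply/(H1 s sI hsd).
have hb : b s <= b t by rewrite bsc.
by split => //; apply/(H1 s sI hsd).
Qed.

Lemma L4 {R : realType} {a b : R -> R} {c : R} : ctsI a -> ctsI b ->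
  (forall t, 0 <= t <= 1 -> exists2 δ, 0 < δ & forall s, 0 <= s <= 1 ->
     `|s - t| < δ -> (a s <= a t <-> b s <= b t)) ->
  (forall t, 0 < t < 1 -> a t = c \/ b t = c) ->
  a 0 = a 1 /\ b 0 = b 1.
Proof.
move=> ca cb co dic.
have co' : forall t, 0 <= t <= 1 -> exists2 δ, 0 < δ & forall s, 0 <= s <= 1 ->
     `|s - t| < δ -> (b s <= b t <-> a s <= a t).
  move=> t tI; have [δ δ0 H] := co t tI; exists δ => // s sI hs.
  by split => /(H s sI hs).
have dic' : forall t, 0 < t < 1 -> b t = c \/ a t = c.
  by move=> t /dic []; [right|left].
have both : forall t, 0 < t < 1 -> exists2 δ, 0 < δ & forall s, 0 <= s <= 1 ->
   `|s - t| < δ -> a s <= a t /\ b s <= b t.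
  move=> t tI; case: (dic t tI) => h; first exact: Lhalf cb co dic tI h.
  have [δ δ0 H] := Lhalf ca co' dic' tI h.
  by exists δ => // s sI hs; have [] := H s sI hs.
split; apply: L2eq => //.
  move=> t tI; have [δ δ0 H] := both t tI.
  by exists δ => // s sI hs; have [] := H s sI hs.
move=> t tI; have [δ δ0 H] := both t tI.
by exists δ => // s sI hs; have [] := H s sI hs.
Qed.
Lemma near_R {R : realType} (t : R) (P : R -> Prop) :
  nbhs t P -> exists2 δ, 0 < δ & forall s, `|s - t| < δ -> P s.
Proof.
move=> /nbhs_ballP [δ δ0 H]; exists δ => // s hs; apply: H.
by rewrite -ball_normE /ball_ /= distrC.
Qed.

Lemma Lcts {R : realType} {T : topologicalType} (p : R -> T) (m : T -> R) (X : set T) :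
  {within [set` `[0, 1]], continuous p} -> (forall t, 0 <= t <= 1 -> X (p t)) ->
  {within X, continuous m} -> ctsI (m \o p).
Proof.
move=> /subspace_continuousP cp pX /subspace_continuousP cm t tI e e0.
have tI' : [set` `[0, 1]] t by rewrite /= in_itv.
have Hm := @cvgr_dist_lt _ _ _ _ (within_filter _ _) _ _ (cm (p t) (pX t tI)) e e0.
specialize (Hm (nbhs_filter _)).
have := cp t tI' _ Hm.
move=> /near_R [δ δ0 H]; exists δ => // s sI hs.
have sI' : [set` `[0, 1]] s by rewrite /= in_itv.
by rewrite distrC; apply: (H s hs sI' (pX s sI)).
Qed.
Lemma Lg {R : realType} {T : topologicalType} (A C X : set T) (g m : T -> R) (z : T) :
  closure A z -> A `<=` C -> (forall w, A w -> g w = m w) ->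
  g @ within C (nbhs z) --> g z -> m @ within X (nbhs z) --> m z -> A `<=` X ->
  g z = m z.
Proof.
move=> zA AC gm hg hm AX.
have PF : ProperFilter (within A (nbhs z)) := @within_nbhs_proper _ A z zA.
have h1 : g @ within A (nbhs z) --> g z.
  exact: cvg_trans (cvg_fmap2 (within_subset (nbhs_filter z) AC)) hg.
have h2 : m @ within A (nbhs z) --> m z.
  exact: cvg_trans (cvg_fmap2 (within_subset (nbhs_filter z) AX)) hm.
have h3 : g @ within A (nbhs z) --> m z.
  apply: cvg_trans h2; apply: fmap_within_eq => w /[!inE] Aw; exact: gm.
exact: (@cvg_unique _ (@Rhausdorff R) (g @ within A (nbhs z)) _ (g z) (m z) h1 h3).
Qed.

Theorem theoremB2 (R : realType) (dX : nat)
  (X0 X1 : set 'rV[R]_dX)                 (* X = X0 u X1 is the support of X *)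
  (m0 m1 : 'rV[R]_dX -> R)                (* m_d x = E[Y(d) | X = x] *)
  (g0 g1 : 'rV[R]_dX -> R)
  (d : bool) (x xs : 'rV[R]_dX) (p : R -> 'rV[R]_dX) :
  closed (X0 `|` X1) ->                    (* a support is closed *)
  X0 `&` X1 = set0 ->
  {within X0 `|` X1, continuous m0} ->
  {within X0 `|` X1, continuous m1} ->
  (* local comonotonicity *)
  (forall x1, (X0 `|` X1) x1 ->
     exists2 N, nbhs x1 N &
       forall x2, N x2 -> (X0 `|` X1) x2 ->
         (m1 x2 <= m1 x1 <-> m0 x2 <= m0 x1)) ->
  (* g0, g1 *)
  (forall z, X0 z -> g0 z = cefY X1 m0 m1 z) ->
  (forall z, frontierF X0 X1 z ->
     continuous_at_within (X0 `|` frontierF X0 X1) g0 z) ->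
  (forall z, X1 z -> g1 z = cefY X1 m0 m1 z) ->
  (forall z, frontierF X0 X1 z ->
     continuous_at_within (X1 `|` frontierF X0 X1) g1 z) ->
  (* the path *)
  (if d then X1 else X0) x ->
  {within `[0, 1], continuous p} ->
  (forall t, [set` `[0, 1]] t -> ((if d then X1 else X0) `|` frontierF X0 X1) (p t)) ->
  p 0 = x -> p 1 = xs -> frontierF X0 X1 xs ->
  (forall t, [set` `]0, 1[] t -> cefY X1 m0 m1 (p t) = cefY X1 m0 m1 x) ->
  m1 x = g1 xs /\ m0 x = g0 xs.
Proof.
move=> clX dis cm0 cm1 como g0E g0c g1E g1c xd cp pin p0 p1 Fxs hpath.
set XX := X0 `|` X1.
have cp' := cp; move/subspace_continuousP in cp'.
have cm0' := cm0; move/subspace_continuousP in cm0'.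
have cm1' := cm1; move/subspace_continuousP in cm1'.
have FX : frontierF X0 X1 `<=` XX.
  move=> z [z1 _]; rewrite (closure_id XX).1 //.
  apply: (closureS (A := X1) (B := XX)); first by move=> w w1; right.
  exact: (closureS (@interior_subset _ X1)).
have pX : forall t, 0 <= t <= 1 -> XX (p t).
  move=> t tI; have : [set` `[0, 1]] t by rewrite /= in_itv.
  move=> /pin; case: d {xd pin} => -[h|h]; try exact: FX; [right|left] => //.
have ca : ctsI (m1 \o p) by exact: Lcts cp pX cm1.
have cb : ctsI (m0 \o p) by exact: Lcts cp pX cm0.
have co : forall t, 0 <= t <= 1 -> exists2 δ, 0 < δ & forall s, 0 <= s <= 1 ->
     `|s - t| < δ -> ((m1 \o p) s <= (m1 \o p) t <-> (m0 \o p) s <= (m0 \o p) t).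
  move=> t tI; have [N hN HN] := como (p t) (pX t tI).
  have tI' : [set` `[0, 1]] t by rewrite /= in_itv.
  have := cp' t tI' _ hN.
  move=> /near_R [δ δ0 H]; exists δ => // s sI hs.
  have sI' : [set` `[0, 1]] s by rewrite /= in_itv.
  exact: HN (H s hs sI') (pX s sI).
have dic : forall t, 0 < t < 1 ->
    (m1 \o p) t = cefY X1 m0 m1 x \/ (m0 \o p) t = cefY X1 m0 m1 x.
  move=> t tI; have : [set` `]0, 1[] t by rewrite /= in_itv.
  move=> /hpath; rewrite {1}/cefY /=; case: asboolP => _ <-; [left|right] => //.
have [ea eb] := L4 ca cb co dic.
rewrite /= p0 p1 in ea eb.
have notX1 : forall w, X0 w -> ~ X1 w.
  by move=> w w0 w1; have : (X0 `&` X1) w by []; rewrite dis.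
case: Fxs => [xs1 xs0].
split.
  rewrite ea; apply/esym; apply: (Lg X1 (X1 `|` frontierF X0 X1) XX).
  - exact: (closureS (@interior_subset _ X1)).
  - by move=> w; left.
  - by move=> w w1; rewrite g1E // /cefY; case: asboolP.
  - by apply: g1c; split.
  - by apply: cm1'; apply: FX.
  - by move=> w; right.
rewrite eb; apply/esym; apply: (Lg X0 (X0 `|` frontierF X0 X1) XX).
- exact: (closureS (@interior_subset _ X0)).
- by move=> w; left.
- by move=> w w0; rewrite g0E // /cefY; case: asboolP => // /(notX1 _ w0).
- by apply: g0c; split.
- by apply: cm0'; apply: FX.
- by move=> w; left.
Qed.
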